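(* There is a constant $C$ such that for every sufficiently large $n$ there exists a $3$-planar graph of girth $5$ on $n$ vertices with at least $2.5n-C$ edges.
   Context: All graphs are finite and simple. A graph is $k$-planar if it admits a drawing in the plane in which every edge is crossed at most $k$ times. The girth of a graph is the length of its shortest cycle. (The paper states the edge count as $2.5n-O(1)$.) *)

(* Defs.v *)
From Stdlib Require Import Reals List.
From mathcomp Require Import all_boot.

Set Implicit Arguments.
Unset Strict Implicit.
Unset Printing Implicit Defensive.

Definition simple_graph (n : nat) (e : rel 'I_n) : Prop :=
  symmetric e /\ irreflexive e.

Definition num_edges (n : nat) (e : rel 'I_n) : nat :=
  #|[set p : 'I_n * 'I_n | (p.1 < p.2) && e p.1 p.2]|.

Definition has_cycle_of_length (n : nat) (e : rel 'I_n) (k : nat) : Prop :=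
  exists s : seq 'I_n, [/\ size s = k, (3 <= k)%N, uniq s & cycle e s].

Definition girth_eq (n : nat) (e : rel 'I_n) (g : nat) : Prop :=
  has_cycle_of_length e g /\
  (forall k, (k < g)%N -> ~ has_cycle_of_length e k).

Local Open Scope R_scope.

Definition continuous_on_01 (g : R -> R * R) : Prop :=
  forall t, 0 <= t <= 1 -> forall eps, 0 < eps -> exists d, 0 < d /\
    forall s, 0 <= s <= 1 -> Rabs (s - t) < d ->
      Rabs (fst (g s) - fst (g t)) < eps /\ Rabs (snd (g s) - snd (g t)) < eps.

Definition jordan_arc (g : R -> R * R) : Prop :=
  continuous_on_01 g /\
  (forall s t, 0 <= s <= 1 -> 0 <= t <= 1 -> g s = g t -> s = t).

Definition is_drawing (n : nat) (e : rel 'I_n)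
    (pos : 'I_n -> R * R) (arc : 'I_n -> 'I_n -> R -> R * R) : Prop :=
  injective pos /\
  forall u v : 'I_n, (u < v)%N -> e u v ->
    [/\ jordan_arc (arc u v), arc u v 0 = pos u, arc u v 1 = pos v &
        forall t w, 0 < t < 1 -> arc u v t <> pos w].

Definition crossed_at_most (n : nat) (e : rel 'I_n)
    (arc : 'I_n -> 'I_n -> R -> R * R) (k : nat) (u v : 'I_n) : Prop :=
  exists l : list ('I_n * 'I_n * R), (size l <= k)%N /\
    forall (x y : 'I_n) (s : R), (x < y)%N -> e x y -> (x, y) <> (u, v) ->
      0 < s < 1 -> (exists t, 0 < t < 1 /\ arc x y t = arc u v s) ->
      List.In (x, y, s) l.

Definition k_planar (k n : nat) (e : rel 'I_n) : Prop :=
  exists pos arc, is_drawing e pos arc /\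
    forall u v : 'I_n, (u < v)%N -> e u v -> crossed_at_most e arc k u v.

(* Main.v *)
Require Import Defs.
From Stdlib Require Import Reals.
From Stdlib Require Import Lra Lia ZArith.
From Stdlib Require List.
From mathcomp Require Import all_boot.
From mathcomp Require Import ssrZ.
From mathcomp Require Import zify.

(* Construction: a periodic strip
   (period 60 vertices, 150 edges per period) cut from a doubly periodic
   3-planar girth-5 straight-line drawing of density 2.6; all finite
   properties are checked by reflection (vm_compute). *)

Local Open Scope R_scope.

Open Scope Z_scope.
Definition Xs : seq Z := [:: 956; 57; 835; 670; 606; 956; 57; 835; 670; 606; 956; 57; 835; 670; 606; 956; 57; 835; 670; 606; 956; 57; 835; 670; 606; 956; 57; 835; 670; 606; 956; 57; 835; 670; 606; 956; 57; 835; 670; 606; 956; 57; 835; 670; 606; 956; 57; 835; 670; 606; 956; 57; 835; 670; 606; 956; 57; 835; 670; 606].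
Definition Ys : seq Z := [:: 948; 85; 736; 308; 607; 1948; 1085; 1736; 1308; 1607; 2948; 2085; 2736; 2308; 2607; 3948; 3085; 3736; 3308; 3607; 4948; 4085; 4736; 4308; 4607; 5948; 5085; 5736; 5308; 5607; 6948; 6085; 6736; 6308; 6607; 7948; 7085; 7736; 7308; 7607; 8948; 8085; 8736; 8308; 8607; 9948; 9085; 9736; 9308; 9607; 10948; 10085; 10736; 10308; 10607; 11948; 11085; 11736; 11308; 11607].
Close Scope Z_scope.
Definition fwdT : seq (seq (nat * nat)) := ([:: [:: (6, 1); (2, 0); (1, 1); (7, 1); (9, 2)];
  [:: (3, 0)];
  [:: (4, 0); (6, 2)];
  [:: (4, 0); (1, 1); (0, 1)];
  [:: (8, 0); (9, 1)];
  [:: (11, 1); (7, 0); (6, 1); (12, 1); (14, 2)];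
  [:: (8, 0)];
  [:: (9, 0); (11, 2)];
  [:: (9, 0); (6, 1); (5, 1)];
  [:: (13, 0); (14, 1)];
  [:: (16, 1); (12, 0); (11, 1); (17, 1); (19, 2)];
  [:: (13, 0)];
  [:: (14, 0); (16, 2)];
  [:: (14, 0); (11, 1); (10, 1)];
  [:: (18, 0); (19, 1)];
  [:: (21, 1); (17, 0); (16, 1); (22, 1); (24, 2)];
  [:: (18, 0)];
  [:: (19, 0); (21, 2)];
  [:: (19, 0); (16, 1); (15, 1)];
  [:: (23, 0); (24, 1)];
  [:: (26, 1); (22, 0); (21, 1); (27, 1); (29, 2)];
  [:: (23, 0)];
  [:: (24, 0); (26, 2)];
  [:: (24, 0); (21, 1); (20, 1)];
  [:: (28, 0); (29, 1)];
  [:: (31, 1); (27, 0); (26, 1); (32, 1); (34, 2)];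
  [:: (28, 0)];
  [:: (29, 0); (31, 2)];
  [:: (29, 0); (26, 1); (25, 1)];
  [:: (33, 0); (34, 1)];
  [:: (36, 1); (32, 0); (31, 1); (37, 1); (39, 2)];
  [:: (33, 0)];
  [:: (34, 0); (36, 2)];
  [:: (34, 0); (31, 1); (30, 1)];
  [:: (38, 0); (39, 1)];
  [:: (41, 1); (37, 0); (36, 1); (42, 1); (44, 2)];
  [:: (38, 0)];
  [:: (39, 0); (41, 2)];
  [:: (39, 0); (36, 1); (35, 1)];
  [:: (43, 0); (44, 1)];
  [:: (46, 1); (42, 0); (41, 1); (47, 1); (49, 2)];
  [:: (43, 0)];
  [:: (44, 0); (46, 2)];
  [:: (44, 0); (41, 1); (40, 1)];
  [:: (48, 0); (49, 1)];
  [:: (51, 1); (47, 0); (46, 1); (52, 1); (54, 2)];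
  [:: (48, 0)];
  [:: (49, 0); (51, 2)];
  [:: (49, 0); (46, 1); (45, 1)];
  [:: (53, 0); (54, 1)];
  [:: (56, 1); (52, 0); (51, 1); (57, 1); (59, 2)];
  [:: (53, 0)];
  [:: (54, 0); (56, 2)];
  [:: (54, 0); (51, 1); (50, 1)];
  [:: (58, 0); (59, 1)];
  [:: (57, 0); (56, 1)];
  [:: (58, 0)];
  [:: (59, 0)];
  [:: (59, 0); (56, 1); (55, 1)];
  [:: ]])%N.

Definition PP : nat := 60.
Definition X (a : nat) : Z := nth 0%Z Xs a.
Definition Y (a : nat) : Z := nth 0%Z Ys a.
Definition fwd (a : nat) : seq (nat * nat) := nth [::] fwdT a.

Definition fwdrel (u v : nat) : bool :=
  (u %/ PP <= v %/ PP)%N && ((v %% PP, v %/ PP - u %/ PP)%N \in fwd (u %% PP)).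
Definition G (n : nat) : rel 'I_n := fun u v => fwdrel u v || fwdrel v u.
Arguments G {n} _ _.

Definition chkX : bool := all (fun a => (0 <=? X a)%Z && (X a <? 1000)%Z) (iota 0 PP).
Definition chkFwd : bool :=
  all (fun a => all (fun p => (p.1 < PP)%N && (p.2 <= 2)%N && ((p.2 == 0%N) ==> (a < p.1)%N)) (fwd a)) (iota 0 PP).
Definition chkDist : bool :=
  all (fun a => all (fun b => (a == b) || ((X a, Y a) != (X b, Y b))) (iota 0 PP)) (iota 0 PP).

Definition cross (ux uy vx vy : Z) : Z := (ux * vy - uy * vx)%Z.

Definition in01 (ns den : Z) : bool :=
  if (0 <? den)%Z then (0 <? ns)%Z && (ns <? den)%Z else (den <? ns)%Z && (ns <? 0)%Z.

Inductive sres := NoInt | At of Z & Z | Bad.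

Definition segint (ax ay bx by' cx cy dx dy : Z) : sres :=
  let den := cross (bx - ax) (by' - ay) (dx - cx) (dy - cy) in
  let ns := cross (cx - ax) (cy - ay) (dx - cx) (dy - cy) in
  let nt := cross (cx - ax) (cy - ay) (bx - ax) (by' - ay) in
  if negb (den =? 0)%Z then
    (if in01 ns den && in01 nt den then At ns den else NoInt)
  else if negb (ns =? 0)%Z || negb (nt =? 0)%Z then NoInt
  else
    let nn := ((bx - ax) * (bx - ax) + (by' - ay) * (by' - ay))%Z in
    let c1 := ((cx - ax) * (bx - ax) + (cy - ay) * (by' - ay))%Z in
    let d1 := ((dx - ax) * (bx - ax) + (dy - ay) * (by' - ay))%Z in
    if (0 <? nn)%Z && (((c1 <=? 0)%Z && (d1 <=? 0)%Z) || ((nn <=? c1)%Z && (nn <=? d1)%Z))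
    then NoInt else Bad.

Definition pt_ok (ax ay bx by' wx wy : Z) : bool :=
  let nn := ((bx - ax) * (bx - ax) + (by' - ay) * (by' - ay))%Z in
  let cr := cross (wx - ax) (wy - ay) (bx - ax) (by' - ay) in
  let dt := ((wx - ax) * (bx - ax) + (wy - ay) * (by' - ay))%Z in
  (0 <? nn)%Z && (negb (cr =? 0)%Z || (dt <=? 0)%Z || (nn <=? dt)%Z).

Definition rs : list Z := [:: (-2)%Z; (-1)%Z; 0%Z; 1%Z; 2%Z].

Definition excluded (a b d : nat) (r : Z) (c e d2 : nat) : bool :=
  (r =? 0)%Z && (c == a) && (e == b) && (d2 == d).

Definition segAt (a b d : nat) (r : Z) (c e d2 : nat) : sres :=
  segint (X a) (Y a) (Z.of_nat d * 1000 + X b) (Y b)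
         (r * 1000 + X c) (Y c) ((r + Z.of_nat d2) * 1000 + X e) (Y e).

Definition cands (a b d : nat) : list (Z * nat * nat * nat * Z * Z) :=
  List.flat_map (fun r => List.flat_map (fun c => List.flat_map (fun p =>
     if excluded a b d r c p.1 p.2 then List.nil else
     match segAt a b d r c p.1 p.2 with
     | At ns den => (r, c, p.1, p.2, ns, den) :: List.nil
     | _ => List.nil end) (fwd c)) (iota 0 PP)) rs.

Definition nobad (a b d : nat) : bool :=
  all (fun r => all (fun c => all (fun p =>
     excluded a b d r c p.1 p.2 ||
     match segAt a b d r c p.1 p.2 with Bad => false | _ => true end) (fwd c)) (iota 0 PP)) rs.

Definition chkCross : bool :=
  all (fun a => all (fun p => (size (cands a p.1 p.2) <= 3)%N && nobad a p.1 p.2) (fwd a)) (iota 0 PP).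

Definition chkPt : bool :=
  all (fun a => all (fun p => all (fun r => all (fun c =>
     pt_ok (X a) (Y a) (Z.of_nat p.2 * 1000 + X p.1) (Y p.1) (r * 1000 + X c) (Y c)) (iota 0 PP)) rs) (fwd a)) (iota 0 PP).

Definition nb (a : nat) : seq (nat * Z) :=
  [seq (p.1, Z.of_nat p.2) | p <- fwd a] ++
  flatten [seq [seq (c, (- Z.of_nat p.2)%Z) | p <- fwd c & p.1 == a] | c <- iota 0 PP].

Definition chkG3 : bool :=
  all (fun a => all (fun p1 => all (fun p2 =>
    ((a, (- (p1.2 + p2.2))%Z) \in nb p2.1) ==>
    ~~ uniq [:: (0%Z, a); (p1.2, p1.1); ((p1.2 + p2.2)%Z, p2.1)]) (nb p1.1)) (nb a)) (iota 0 PP).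

Definition chkG4 : bool :=
  all (fun a => all (fun p1 => all (fun p2 => all (fun p3 =>
    ((a, (- (p1.2 + p2.2 + p3.2))%Z) \in nb p3.1) ==>
    ~~ uniq [:: (0%Z, a); (p1.2, p1.1); ((p1.2 + p2.2)%Z, p2.1); ((p1.2 + p2.2 + p3.2)%Z, p3.1)])
    (nb p2.1)) (nb p1.1)) (nb a)) (iota 0 PP).

Definition cyc5 : seq nat := [:: 0; 66; 68; 64; 129]%N.
Definition chkC5 : bool := cycle (fun u v => fwdrel u v || fwdrel v u) cyc5 && uniq cyc5.

Lemma chkX_ok : chkX. Proof. vm_compute. reflexivity. Qed.
Lemma chkFwd_ok : chkFwd. Proof. vm_compute. reflexivity. Qed.
Lemma chkDist_ok : chkDist. Proof. vm_compute. reflexivity. Qed.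
Lemma chkC5_ok : chkC5. Proof. vm_compute. reflexivity. Qed.
Lemma chkG3_ok : chkG3. Proof. vm_compute. reflexivity. Qed.
Lemma chkG4_ok : chkG4. Proof. vm_compute. reflexivity. Qed.
Lemma chkPt_ok : chkPt. Proof. vm_compute. reflexivity. Qed.
Lemma chkCross_ok : chkCross. Proof. vm_compute. reflexivity. Qed.


Lemma in01_sound (ns den : Z) (s : R) : 0 < s < 1 -> IZR ns = s * IZR den -> (den <> 0)%Z -> in01 ns den.
Proof.
move=> hs he hd. rewrite /in01.
case: (Z.ltb_spec 0 den) => hden.
- have h1 : (0 < IZR den) by apply: IZR_lt.
  have h2 : 0 < IZR ns by rewrite he; nra.
  have h3 : IZR ns < IZR den by rewrite he; nra.
  apply/andP; split; apply/Z.ltb_spec0; [exact: lt_IZR | exact: lt_IZR].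
- have h1 : (IZR den < 0) by apply: IZR_lt; lia.
  have h2 : IZR ns < 0 by rewrite he; nra.
  have h3 : IZR den < IZR ns by rewrite he; nra.
  apply/andP; split; apply/Z.ltb_spec0; [exact: lt_IZR | exact: lt_IZR].
Qed.

Lemma segint_sound (T : R) (ax ay bx by' cx cy dx dy : Z) (s t : R) :
  0 < s < 1 -> 0 < t < 1 ->
  (1 - s) * (T + IZR ax) + s * (T + IZR bx) = (1 - t) * (T + IZR cx) + t * (T + IZR dx) ->
  (1 - s) * IZR ay + s * IZR by' = (1 - t) * IZR cy + t * IZR dy ->
  match segint ax ay bx by' cx cy dx dy with
  | At ns den => s = IZR ns / IZR den
  | NoInt => False
  | Bad => True end.
Proof.
move=> hs ht ex ey.
have E1 : s * (IZR bx - IZR ax) - t * (IZR dx - IZR cx) - (IZR cx - IZR ax) = 0 by nra.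
have E2 : s * (IZR by' - IZR ay) - t * (IZR dy - IZR cy) - (IZR cy - IZR ay) = 0 by nra.
rewrite /segint /cross.
set den := ((bx - ax) * (dy - cy) - (by' - ay) * (dx - cx))%Z.
set ns := ((cx - ax) * (dy - cy) - (cy - ay) * (dx - cx))%Z.
set nt := ((cx - ax) * (by' - ay) - (cy - ay) * (bx - ax))%Z.
have Hs : IZR ns = s * IZR den.
  have : IZR ns - s * IZR den = - ((s * (IZR bx - IZR ax) - t * (IZR dx - IZR cx) - (IZR cx - IZR ax)) * (IZR dy - IZR cy)
        - (s * (IZR by' - IZR ay) - t * (IZR dy - IZR cy) - (IZR cy - IZR ay)) * (IZR dx - IZR cx)).
    rewrite /ns /den !minus_IZR !mult_IZR !minus_IZR. ring.
  rewrite E1 E2. lra.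
have Ht : IZR nt = t * IZR den.
  have : IZR nt - t * IZR den = - ((s * (IZR bx - IZR ax) - t * (IZR dx - IZR cx) - (IZR cx - IZR ax)) * (IZR by' - IZR ay)
        - (s * (IZR by' - IZR ay) - t * (IZR dy - IZR cy) - (IZR cy - IZR ay)) * (IZR bx - IZR ax)).
    rewrite /nt /den !minus_IZR !mult_IZR !minus_IZR. ring.
  rewrite E1 E2. lra.
case: (Z.eqb_spec den 0) => hden /=.
- have ns0 : ns = 0%Z.
    apply: eq_IZR. rewrite Hs hden. lra.
  have nt0 : nt = 0%Z.
    apply: eq_IZR. rewrite Ht hden. lra.
  rewrite ns0 nt0 /=.
  set nn := ((bx - ax) * (bx - ax) + (by' - ay) * (by' - ay))%Z.
  set c1 := ((cx - ax) * (bx - ax) + (cy - ay) * (by' - ay))%Z.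
  set d1 := ((dx - ax) * (bx - ax) + (dy - ay) * (by' - ay))%Z.
  have Hd : s * IZR nn = (1 - t) * IZR c1 + t * IZR d1.
    have : s * IZR nn - ((1 - t) * IZR c1 + t * IZR d1) =
      (s * (IZR bx - IZR ax) - t * (IZR dx - IZR cx) - (IZR cx - IZR ax)) * (IZR bx - IZR ax)
      + (s * (IZR by' - IZR ay) - t * (IZR dy - IZR cy) - (IZR cy - IZR ay)) * (IZR by' - IZR ay).
      rewrite /nn /c1 /d1 !plus_IZR !mult_IZR !minus_IZR. ring.
    rewrite E1 E2. lra.
  case: ifP => // /andP [/Z.ltb_spec0 hnn /orP [/andP [/Z.leb_spec0 h1 /Z.leb_spec0 h2] | /andP [/Z.leb_spec0 h1 /Z.leb_spec0 h2]]].
  + apply IZR_lt in hnn. apply IZR_le in h1. apply IZR_le in h2. nra.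
  + apply IZR_lt in hnn. apply IZR_le in h1. apply IZR_le in h2. nra.
- have hdR : IZR den <> 0 by apply: not_0_IZR.
  rewrite (in01_sound _ _ _ hs Hs hden) (in01_sound _ _ _ ht Ht hden) /=.
  rewrite Hs. field. exact hdR.
Qed.

Lemma pt_sound (T : R) (ax ay bx by' wx wy : Z) (t : R) :
  0 < t < 1 ->
  (1 - t) * (T + IZR ax) + t * (T + IZR bx) = T + IZR wx ->
  (1 - t) * IZR ay + t * IZR by' = IZR wy ->
  pt_ok ax ay bx by' wx wy = false.
Proof.
move=> ht ex ey.
have E1 : IZR wx - IZR ax = t * (IZR bx - IZR ax) by nra.
have E2 : IZR wy - IZR ay = t * (IZR by' - IZR ay) by nra.
rewrite /pt_ok /cross.
set nn := ((bx - ax) * (bx - ax) + (by' - ay) * (by' - ay))%Z.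
set cr := ((wx - ax) * (by' - ay) - (wy - ay) * (bx - ax))%Z.
set dt := ((wx - ax) * (bx - ax) + (wy - ay) * (by' - ay))%Z.
have Hc : IZR cr = 0.
  rewrite /cr !minus_IZR !mult_IZR !minus_IZR E1 E2. ring.
have Hd : IZR dt = t * IZR nn.
  rewrite /dt /nn !plus_IZR !mult_IZR !minus_IZR E1 E2. ring.
have cr0 : cr = 0%Z by apply: eq_IZR.
rewrite cr0 /=.
case: (Z.ltb_spec 0 nn) => hnn //=.
apply IZR_lt in hnn.
apply/negbTE/negP => /orP [/Z.leb_spec0 h | /Z.leb_spec0 h]; apply IZR_le in h; nra.
Qed.


Definition segf (A B : R * R) (t : R) : R * R :=
  ((1 - t) * fst A + t * fst B, (1 - t) * snd A + t * snd B).

Lemma segf_cont (A B : R * R) : continuous_on_01 (segf A B).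
Proof.
move=> t _ eps heps.
set K := Rabs (fst B - fst A) + Rabs (snd B - snd A) + 1.
have hK : 0 < K by rewrite /K; move: (Rabs_pos (fst B - fst A)) (Rabs_pos (snd B - snd A)); lra.
exists (eps / K); split; first by apply: Rdiv_lt_0_compat.
move=> s _ hst.
have key : forall a b, Rabs ((1 - s) * a + s * b - ((1 - t) * a + t * b)) < eps /\ True ->
   True by [].
have h1 : forall a b, Rabs (b - a) + 1 <= K -> Rabs ((1 - s) * a + s * b - ((1 - t) * a + t * b)) < eps.
  move=> a b hab.
  have -> : (1 - s) * a + s * b - ((1 - t) * a + t * b) = (s - t) * (b - a) by ring.
  rewrite Rabs_mult.
  have hb := Rabs_pos (b - a).
  have hst' := Rabs_pos (s - t).
  have : Rabs (s - t) * K < eps.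
    have -> : eps = eps / K * K by field; lra.
    apply: Rmult_lt_compat_r => //.
  nra.
rewrite /segf /=. split; apply: h1; rewrite /K;
move: (Rabs_pos (fst B - fst A)) (Rabs_pos (snd B - snd A)); lra.
Qed.

Lemma segf_jordan (A B : R * R) : A <> B -> jordan_arc (segf A B).
Proof.
move=> hAB; split; first exact: segf_cont.
move=> s t _ _ [e1 e2].
apply: Rminus_diag_uniq.
have h1 : (s - t) * (fst B - fst A) = 0 by nra.
have h2 : (s - t) * (snd B - snd A) = 0 by nra.
case: (Req_dec (s - t) 0) => // hne.
exfalso; apply: hAB.
have x1 : fst B - fst A = 0 by apply: (Rmult_eq_reg_l (s - t)); lra.
have x2 : snd B - snd A = 0 by apply: (Rmult_eq_reg_l (s - t)); lra.
case: A B x1 x2 {h1 h2 e1 e2} => a1 a2 [b1 b2] /= x1 x2.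
f_equal; lra.
Qed.

Lemma segf0 A B : segf A B 0 = A.
Proof. case: A => a1 a2; rewrite /segf /=; f_equal; ring. Qed.
Lemma segf1 A B : segf A B 1 = B.
Proof. case: B => b1 b2; rewrite /segf /=; f_equal; ring. Qed.

Set Implicit Arguments. Unset Strict Implicit.

Lemma PP_gt0 : (0 < PP)%N. Proof. by []. Qed.

Lemma X_bounds a : (a < PP)%N -> (0 <= X a < 1000)%Z.
Proof.
move=> ha. have := chkX_ok. rewrite /chkX => /allP /(_ a).
rewrite mem_iota add0n ha => /(_ isT) /andP [/Z.leb_spec0 h1 /Z.ltb_spec0 h2]. lia.
Qed.

Lemma fwd_facts a b d : (a < PP)%N -> (b, d) \in fwd a -> [/\ (b < PP)%N, (d <= 2)%N & (d = 0%N -> (a < b)%N)].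
Proof.
move=> ha hin. have := chkFwd_ok. rewrite /chkFwd => /allP /(_ a).
rewrite mem_iota add0n ha => /(_ isT) /allP /(_ _ hin) /= /andP [/andP [h1 h2] h3].
split => // d0. by move: h3; rewrite d0 eqxx.
Qed.

Lemma XY_inj a b : (a < PP)%N -> (b < PP)%N -> X a = X b -> Y a = Y b -> a = b.
Proof.
move=> ha hb hx hy. have := chkDist_ok. rewrite /chkDist => /allP /(_ a).
rewrite mem_iota add0n ha => /(_ isT) /allP /(_ b).
rewrite mem_iota add0n hb => /(_ isT) /orP [/eqP // | ].
by rewrite hx hy eqxx.
Qed.

Lemma divmod v : v = (v %/ PP * PP + v %% PP)%N.
Proof. exact: divn_eq. Qed.
Lemma modlt v : (v %% PP < PP)%N.
Proof. exact: ltn_pmod. Qed.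

Lemma fwdrel_lt u v : fwdrel u v -> (u < v)%N.
Proof.
move=> /andP [hle hin].
have [hb hd h0] := fwd_facts (modlt u) hin.
rewrite (divmod u) (divmod v).
move: hle hb hd h0 (modlt u) (modlt v).
move: (u %/ PP) (v %/ PP) (u %% PP) (v %% PP) => qu qv a b.
rewrite /PP. lia.
Qed.

Lemma G_sym n : symmetric (@G n).
Proof. by move=> u v; rewrite /G orbC. Qed.

Lemma G_irr n : irreflexive (@G n).
Proof. move=> u; rewrite /G orbb; apply/negP => /fwdrel_lt; by rewrite ltnn. Qed.

Lemma G_fwd n (u v : 'I_n) : (u < v)%N -> G u v -> fwdrel u v.
Proof.
move=> huv /orP [//|/fwdrel_lt hvu]. exfalso. move: huv hvu. lia.
Qed.


Lemma sum_period : (\sum_(0 <= i < PP) size (fwd (i %% PP)) = 150)%N.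
Proof. rewrite unlock. vm_compute. reflexivity. Qed.

Lemma uniq_fwd a : uniq (fwd a).
Proof.
case: (ltnP a PP) => ha.
- have : all (fun a => uniq (fwd a)) (iota 0 PP) by vm_compute.
  move/allP/(_ a). rewrite mem_iota add0n ha. by apply.
- by rewrite /fwd nth_default.
Qed.

Lemma sum_K K : (\sum_(0 <= x < K * PP) size (fwd (x %% PP)) = K * 150)%N.
Proof.
elim: K => [|K IH]; first by rewrite mul0n big_geq.
rewrite mulSnr (big_cat_nat _ (n:=K * PP)) //=; last by rewrite leq_addr.
rewrite IH mulSnr. congr (_ + _)%N.
rewrite -{1}[(K * PP)%N]add0n big_addn addKn.
rewrite -sum_period. apply: eq_bigr => i _.
by rewrite addnC modnMDl.
Qed.

Lemma card_fwd n (x : 'I_n) : ((x %/ PP + 3) * PP <= n)%N ->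
  (size (fwd (x %% PP)) <= #|[set y : 'I_n | fwdrel x y]|)%N.
Proof.
move=> hn.
set a := (x %% PP)%N. set q := (x %/ PP)%N.
have ha : (a < PP)%N := modlt x.
pose f := fun p : nat * nat => insubd x ((q + p.2) * PP + p.1)%N.
have hval : forall p, p \in fwd a -> val (f p) = ((q + p.2) * PP + p.1)%N.
  move=> [b d] hp. have [hb hd _] := fwd_facts ha hp.
  rewrite /f val_insubd /=. case: ifP => // /negbT. rewrite -leqNgt => hc.
  exfalso. move: hn hc hb hd. rewrite /PP. lia.
have huniq : uniq (map f (fwd a)).
  rewrite map_inj_in_uniq ?uniq_fwd //.
  move=> [b d] [b' d'] hp hp' /(congr1 val). rewrite (hval _ hp) (hval _ hp') /=.
  have [hb _ _] := fwd_facts ha hp. have [hb' _ _] := fwd_facts ha hp'.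
  move: hb hb'. rewrite /PP => hb hb' h. f_equal; lia.
rewrite -(size_map f) -(card_uniqP huniq).
apply: subset_leq_card. apply/subsetP => y /mapP [[b d] hp ->].
rewrite inE /fwdrel (hval _ hp) /=.
have [hb hd _] := fwd_facts ha hp.
have e1 : (((q + d) * PP + b) %/ PP = q + d)%N by rewrite divnMDl // (divn_small hb) addn0.
have e2 : (((q + d) * PP + b) %% PP = b)%N by rewrite modnMDl (modn_small hb).
rewrite e1 e2 -/q leq_addr /=. by rewrite addKn.
Qed.

Lemma num_edges_ge n : (150 * (n %/ PP - 3) <= num_edges (@G n))%N.
Proof.
set K := (n %/ PP - 3)%N.
have h1 : (#|[set p : 'I_n * 'I_n | fwdrel p.1 p.2]| <= num_edges (@G n))%N.
  apply: subset_leq_card; apply/subsetP => p; rewrite !inE => h.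
  by rewrite (fwdrel_lt h) /G h.
have h2 : #|[set p : 'I_n * 'I_n | fwdrel p.1 p.2]| = (\sum_(x : 'I_n) #|[set y : 'I_n | fwdrel x y]|)%N.
  rewrite -sum1_card.
  rewrite (eq_bigl (fun p : 'I_n * 'I_n => predT p.1 && fwdrel p.1 p.2)); last by move=> p; rewrite inE.
  rewrite -(pair_big_dep predT (fun (x y : 'I_n) => fwdrel x y) (fun _ _ => 1%N)).
  apply: eq_bigr => x _. rewrite -sum1_card. apply: eq_bigl => y. by rewrite inE.
have hKn : (K * PP <= n)%N.
  move: (divmod n). rewrite /K /PP. lia.
have h3 : (\sum_(x < K * PP) size (fwd (x %% PP)) <= \sum_(x : 'I_n) #|[set y : 'I_n | fwdrel x y]|)%N.
  rewrite (big_ord_widen _ (fun x => size (fwd (x %% PP))) hKn).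
  rewrite (bigID (fun x : 'I_n => (x < K * PP)%N) predT) /=.
  apply: leq_trans (leq_addr _ _).
  apply: leq_sum => x hx. apply: card_fwd.
  move: (divmod x) (divmod n) hx (modlt x). rewrite /K /PP. lia.
rewrite mulnC -sum_K big_mkord.
rewrite -h2 in h3. exact: leq_trans h3 h1.
Qed.


Definition qz (v : nat) : Z := Z.of_nat (v %/ PP).

Lemma G_nb n (u v : 'I_n) : G u v -> ((v %% PP)%N, (qz v - qz u)%Z) \in nb (u %% PP).
Proof.
rewrite /nb mem_cat => /orP [/andP [hle hin] | /andP [hle hin]].
- apply/orP; left. apply/mapP. exists (v %% PP, v %/ PP - u %/ PP)%N => //=.
  congr (_, _). rewrite /qz /=. lia.
- apply/orP; right. apply/flatten_mapP. exists (v %% PP)%N.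
    by rewrite mem_iota add0n modlt.
  apply/mapP. exists (u %% PP, u %/ PP - v %/ PP)%N.
    by rewrite mem_filter eqxx hin.
  congr (_, _). rewrite /qz /=. lia.
Qed.

Definition relv (v0 v : nat) : Z * nat := ((qz v - qz v0)%Z, (v %% PP)%N).

Lemma relv_inj v0 : injective (relv v0).
Proof.
move=> v w [h1 h2]. rewrite (divmod v) (divmod w) h2.
have : (v %/ PP)%N = (w %/ PP)%N by move: h1; rewrite /qz; lia.
by move=> ->.
Qed.

Lemma no_short n k : (k < 5)%N -> ~ has_cycle_of_length (@G n) k.
Proof.
move=> hk; rewrite /has_cycle_of_length => -[s [hs hk3 hu hc]].
have hu' : uniq (map (relv (head 0%N (map val s)) \o val) s).
  by rewrite map_inj_uniq // => x y /relv_inj /val_inj.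
have : k = 3%N \/ k = 4%N by lia.
case=> e; rewrite e in hs.
- case: s hs hu hc hu' => [|v0 [|v1 [|v2 [|]]]] // _ _ hc hu'.
  move: hc => /= /and4P [h01 h12 h20 _].
  have := chkG3_ok. rewrite /chkG3 => /allP /(_ (v0 %% PP)%N).
  rewrite mem_iota add0n modlt => /(_ isT) /allP /(_ _ (G_nb h01)) /allP /(_ _ (G_nb h12)) /=.
  have -> : (- (qz v1 - qz v0 + (qz v2 - qz v1)))%Z = (qz v0 - qz v2)%Z by lia.
  rewrite (G_nb h20) /=.
  have -> : (qz v1 - qz v0 + (qz v2 - qz v1))%Z = (qz v2 - qz v0)%Z by lia.
  move: hu'. rewrite /= /relv Z.sub_diag. by move=> ->.
- case: s hs hu hc hu' => [|v0 [|v1 [|v2 [|v3 [|]]]]] // _ _ hc hu'.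
  move: hc => /= /and5P [h01 h12 h23 h30 _].
  have := chkG4_ok. rewrite /chkG4 => /allP /(_ (v0 %% PP)%N).
  rewrite mem_iota add0n modlt => /(_ isT) /allP /(_ _ (G_nb h01)) /allP /(_ _ (G_nb h12)) /allP /(_ _ (G_nb h23)) /=.
  have -> : (- (qz v1 - qz v0 + (qz v2 - qz v1) + (qz v3 - qz v2)))%Z = (qz v0 - qz v3)%Z by lia.
  rewrite (G_nb h30) /=.
  have -> : (qz v1 - qz v0 + (qz v2 - qz v1))%Z = (qz v2 - qz v0)%Z by lia.
  have -> : (qz v2 - qz v0 + (qz v3 - qz v2))%Z = (qz v3 - qz v0)%Z by lia.
  move: hu'. rewrite /= /relv Z.sub_diag. by move=> ->.
Qed.

Lemma cyc5_exists n : (130 <= n)%N -> has_cycle_of_length (@G n) 5.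
Proof.
move=> hn.
have h0 : (0 < n)%N by lia.
pose x0 : 'I_n := Ordinal h0.
have h : forall k, (k < 130)%N -> val (insubd x0 k) = k.
  move=> k hk. rewrite val_insubd. case: ifP => //. move/negbT. rewrite -leqNgt. lia.
have hv : map val (map (insubd x0) cyc5) = cyc5 by rewrite /cyc5 /= !h.
have := chkC5_ok. rewrite /chkC5 => /andP [hc hu].
exists (map (insubd x0) cyc5). split => //.
- by rewrite -hv in hu; apply: map_uniq hu.
- have -> : cycle (@G n) (map (insubd x0) cyc5) = cycle (fun u v => fwdrel u v || fwdrel v u) (map val (map (insubd x0) cyc5)).
    by rewrite cycle_map.
  by rewrite hv.
Qed.

Lemma girth5 n : (130 <= n)%N -> girth_eq (@G n) 5.
Proof. move=> hn; split; [exact: cyc5_exists | move=> k hk; exact: no_short]. Qed.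


Definition posn n (v : 'I_n) : R * R := (IZR (1000 * qz v + X (v %% PP)), IZR (Y (v %% PP))).
Definition arcn n (u v : 'I_n) : R -> R * R := segf (posn u) (posn v).

Lemma posn_fst n (u w : 'I_n) :
  fst (posn w) = IZR (1000 * qz u) + IZR ((qz w - qz u) * 1000 + X (w %% PP)).
Proof.
rewrite -plus_IZR.
change (IZR (1000 * qz w + X (w %% PP)) = IZR (1000 * qz u + ((qz w - qz u) * 1000 + X (w %% PP)))).
congr IZR. lia.
Qed.

Lemma posn_inj n : injective (@posn n).
Proof.
move=> u w E.
have h1 : (1000 * qz u + X (u %% PP) = 1000 * qz w + X (w %% PP))%Z by apply: eq_IZR; exact: (f_equal fst E).
have h2 : Y (u %% PP) = Y (w %% PP) by apply: eq_IZR; exact: (f_equal snd E).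
have hu := X_bounds (modlt u). have hw := X_bounds (modlt w).
have hq : qz u = qz w by lia.
have hx : X (u %% PP) = X (w %% PP) by lia.
have hc := XY_inj (modlt u) (modlt w) hx h2.
apply: val_inj. rewrite /= (divmod u) (divmod w) hc.
move: hq; rewrite /qz => hq. have -> : (u %/ PP)%N = (w %/ PP)%N by lia. done.
Qed.

Lemma conv_rng (L M A B t : R) : 0 < t < 1 -> L <= A < M -> L <= B < M -> L <= (1-t)*A + t*B < M.
Proof. move=> ht [h1 h2] [h3 h4]. split; nra. Qed.

Lemma bbox_core (T V : R) (r : Z) : T <= V < T + 3000 ->
  T + IZR (r * 1000) <= V < T + IZR (r * 1000) + 3000 -> (-2 <= r <= 2)%Z.
Proof.
move=> [h1 h2] [h3 h4].
have a1 : IZR (r * 1000) < IZR 3000 by lra.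
have a2 : IZR (-3000) < IZR (r * 1000) by lra.
apply lt_IZR in a1. apply lt_IZR in a2. lia.
Qed.

Lemma rng_pt (T : R) (r x : Z) : (0 <= x < 1000)%Z ->
  T + IZR (r * 1000) <= T + IZR (r * 1000 + x) < T + IZR (r * 1000) + 3000.
Proof.
move=> hx. rewrite plus_IZR.
have : 0 <= IZR x < 1000 by split; [apply IZR_le | apply IZR_lt]; lia.
lra.
Qed.

Lemma rng_edge (T : R) (r x : Z) (d : nat) : (0 <= x < 1000)%Z -> (d <= 2)%N ->
  T + IZR (r * 1000) <= T + IZR ((r + Z.of_nat d) * 1000 + x) < T + IZR (r * 1000) + 3000.
Proof.
move=> hx hd.
have e : ((r + Z.of_nat d) * 1000 + x = r * 1000 + (Z.of_nat d * 1000 + x))%Z by ring.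
rewrite e plus_IZR.
have : 0 <= IZR (Z.of_nat d * 1000 + x) < 3000 by split; [apply IZR_le | apply IZR_lt]; lia.
lra.
Qed.

Lemma fwd_q u v : fwdrel u v -> (qz v - qz u = Z.of_nat (v %/ PP - u %/ PP))%Z.
Proof. move=> /andP [hle _]. rewrite /qz. lia. Qed.

Lemma in_rs (r : Z) : (-2 <= r <= 2)%Z -> r \in rs.
Proof.
move=> h. have : (r = -2 \/ r = -1 \/ r = 0 \/ r = 1 \/ r = 2)%Z by lia.
by case=> [->|[->|[->|[->|->]]]].
Qed.

Lemma avoid n (u v w : 'I_n) t : fwdrel u v -> 0 < t < 1 -> arcn u v t <> posn w.
Proof.
move=> hf ht E.
have hfv := hf. move: hfv => /andP [_ hin].
set a := (u %% PP)%N in hin. set b := (v %% PP)%N in hin. set d := (v %/ PP - u %/ PP)%N in hin.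
have [hb hd _] := fwd_facts (modlt u) hin.
set T := IZR (1000 * qz u).
set r := (qz w - qz u)%Z.
have [E1 E2] : fst (arcn u v t) = fst (posn w) /\ snd (arcn u v t) = snd (posn w) by rewrite E.
rewrite /arcn /segf in E1 E2. cbn [fst snd] in E1. cbn [fst snd] in E2.
rewrite (posn_fst u u) (posn_fst u v) (posn_fst u w) in E1.
rewrite Z.sub_diag Z.mul_0_l Z.add_0_l (fwd_q hf) -/T -/r -/a -/b -/d in E1.
have hr : (-2 <= r <= 2)%Z.
  apply: (bbox_core (T := T) (V := T + IZR (r * 1000 + X (w %% PP)))); last first.
    exact: rng_pt (X_bounds (modlt w)).
  rewrite -E1.
  have := rng_pt T 0 (X_bounds (modlt u)). have := rng_edge T 0 (X_bounds (modlt v)) hd.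
  rewrite !Z.mul_0_l !Z.add_0_l !Rplus_0_r -/a -/b => h1 h2.
  by apply: conv_rng.
have := chkPt_ok. rewrite /chkPt => /allP /(_ a).
rewrite mem_iota add0n modlt => /(_ isT) /allP /(_ _ hin) /allP /(_ _ (in_rs hr)) /allP /(_ (w %% PP)%N).
rewrite mem_iota add0n modlt => /(_ isT) /=.
have E2' : (1 - t) * IZR (Y a) + t * IZR (Y b) = IZR (Y (w %% PP)) by exact: E2.
by rewrite (pt_sound T (X a) (Y a) (Z.of_nat d * 1000 + X b) (Y b) (r * 1000 + X (w %% PP)) (Y (w %% PP)) t ht E1 E2').
Qed.


Definition mkv n (x0 : 'I_n) (z : Z) (c : nat) : 'I_n := insubd x0 (Z.to_nat z * PP + c)%N.

Definition lst n (u v : 'I_n) : seq ('I_n * 'I_n * R) :=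
  map (fun tau : Z * nat * nat * nat * Z * Z =>
         let '(r, c, e, d2, ns, den) := tau in
         (mkv u (qz u + r) c, mkv u (qz u + r + Z.of_nat d2) e, IZR ns / IZR den))
      (cands (u %% PP) (v %% PP) (v %/ PP - u %/ PP)).

Lemma In_seqmap (A B : Type) (f : A -> B) x (l : seq A) : List.In x l -> List.In (f x) (map f l).
Proof. elim: l => //= y l IH [->|h]; [by left | right; exact: IH]. Qed.

Lemma In_of_mem (T : eqType) (x : T) (s : seq T) : x \in s -> List.In x s.
Proof. elim: s => //= y s IH; rewrite inE => /orP [/eqP ->|h]; [by left | right; exact: IH]. Qed.

Lemma mkv_eq n (x0 x : 'I_n) (z : Z) : z = Z.of_nat (x %/ PP) -> mkv x0 z (x %% PP) = x.
Proof.
move=> ->. apply: val_inj. rewrite /mkv val_insubd Nat2Z.id -divmod ltn_ord. done.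
Qed.

Lemma eq_parts (x u : nat) : (x %% PP = u %% PP)%N -> qz x = qz u -> x = u.
Proof.
move=> h1 h2. rewrite (divmod x) (divmod u) h1.
move: h2; rewrite /qz => h2. have -> : (x %/ PP)%N = (u %/ PP)%N by lia. done.
Qed.

Lemma qy_eq (x y u v : nat) : fwdrel x y -> fwdrel u v -> qz x = qz u ->
  (y %/ PP - x %/ PP)%N = (v %/ PP - u %/ PP)%N -> qz y = qz v.
Proof.
move=> h1 h2 h3 h4. have := fwd_q h1. have := fwd_q h2. rewrite h4. lia.
Qed.

Lemma cross_ok n (u v : 'I_n) : (u < v)%N -> G u v -> crossed_at_most (@G n) (@arcn n) 3 u v.
Proof.
move=> huv hG.
have hf := G_fwd huv hG.
have hfv := hf. move: hfv => /andP [_ hin].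
set a := (u %% PP)%N in hin. set b := (v %% PP)%N in hin. set d := (v %/ PP - u %/ PP)%N in hin.
have [hb hd _] := fwd_facts (modlt u) hin.
have hchk := chkCross_ok. rewrite /chkCross in hchk.
move/allP: hchk => /(_ a). rewrite mem_iota add0n modlt => /(_ isT) /allP /(_ _ hin) /= /andP [hsz hnb].
exists (lst u v). split; first by rewrite /lst size_map.
move=> x y s hxy hGxy hne hs [t [ht E]].
have hf' := G_fwd hxy hGxy.
have hfv' := hf'. move: hfv' => /andP [_ hin'].
set c := (x %% PP)%N in hin'. set e := (y %% PP)%N in hin'. set d2 := (y %/ PP - x %/ PP)%N in hin'.
have [he hd2 _] := fwd_facts (modlt x) hin'.
set T := IZR (1000 * qz u).
set r := (qz x - qz u)%Z.
have [E1 E2] : fst (arcn u v s) = fst (arcn x y t) /\ snd (arcn u v s) = snd (arcn x y t) by rewrite E.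
rewrite /arcn /segf in E1 E2. cbn [fst snd] in E1. cbn [fst snd] in E2.
rewrite (posn_fst u u) (posn_fst u v) (posn_fst u x) (posn_fst u y) in E1.
have ey : (qz y - qz u = r + Z.of_nat d2)%Z by rewrite /r -(fwd_q hf'); lia.
rewrite Z.sub_diag Z.mul_0_l Z.add_0_l (fwd_q hf) ey -/T -/r -/a -/b -/d -/c -/e in E1.
have hr : (-2 <= r <= 2)%Z.
  apply: (bbox_core (T := T) (V := (1 - s) * (T + IZR (X a)) + s * (T + IZR (Z.of_nat d * 1000 + X b)))).
    have := rng_pt T 0 (X_bounds (modlt u)). have := rng_edge T 0 (X_bounds (modlt v)) hd.
    rewrite !Z.mul_0_l !Z.add_0_l !Rplus_0_r -/a -/b => h1 h2.
    by apply: conv_rng.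
  rewrite E1. apply: conv_rng => //.
  - exact: rng_pt (X_bounds (modlt x)).
  - exact: rng_edge (X_bounds (modlt y)) hd2.
have E2' : (1 - s) * IZR (Y a) + s * IZR (Y b) = (1 - t) * IZR (Y c) + t * IZR (Y e) by exact: E2.
have Hs := segint_sound T (X a) (Y a) (Z.of_nat d * 1000 + X b) (Y b) (r * 1000 + X c) (Y c)
   ((r + Z.of_nat d2) * 1000 + X e) (Y e) s t hs ht E1 E2'.
have hexcl : excluded a b d r c e d2 = false.
  rewrite /excluded.
  case: (Z.eqb_spec r 0) => //= r0.
  case: (eqVneq c a) => //= ca.
  case: (eqVneq e b) => //= eb.
  case: (eqVneq d2 d) => //= dd.
  exfalso. apply: hne.
  have r0' : (qz x - qz u = 0)%Z := r0.
  have hq : qz x = qz u by clear -r0'; lia.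
  have xu : x = u by apply: val_inj; apply: eq_parts.
  have yv : y = v by apply: val_inj; apply: eq_parts => //; exact: (qy_eq hf' hf hq dd).
  by rewrite xu yv.
have hnbad : segAt a b d r c e d2 <> Bad.
  move: hnb. rewrite /nobad => /allP /(_ r (in_rs hr)) /allP /(_ c).
  rewrite mem_iota add0n modlt => /(_ isT) /allP /(_ _ hin').
  cbn [fst snd]. rewrite hexcl orFb.
  by case: (segAt a b d r c e d2).
rewrite /segAt in hnbad.
move: Hs hnbad.
case Eseg : (segint (X a) (Y a) (Z.of_nat d * 1000 + X b) (Y b) (r * 1000 + X c) (Y c)
   ((r + Z.of_nat d2) * 1000 + X e) (Y e)) => [|ns den|] // -> _.
have hx : mkv u (qz u + r) c = x.
  apply: mkv_eq. rewrite /r /qz. clear. lia.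
have hy : mkv u (qz u + r + Z.of_nat d2) e = y.
  apply: mkv_eq. move: ey. rewrite /r /qz. clear. lia.
rewrite -hx -hy /lst.
apply: (@In_seqmap _ _ _ (r, c, e, d2, ns, den)).
rewrite /cands. apply/List.in_flat_map. exists r. split; first exact: In_of_mem (in_rs hr).
apply/List.in_flat_map. exists c. split; first by apply: In_of_mem; rewrite mem_iota add0n modlt.
apply/List.in_flat_map. exists (e, d2). split; first exact: In_of_mem hin'.
cbn [fst snd]. rewrite hexcl /segAt Eseg. by left.
Qed.


Theorem theorem22 :
  exists C : R, exists N : nat, forall n : nat, (N <= n)%N ->
    exists e : rel 'I_n,
      [/\ simple_graph e, k_planar 3 e, girth_eq e 5 &
          INR (num_edges e) >= 5 / 2 * INR n - C].
Proof.
exists 1000. exists 130%N. move=> n hn. exists (@G n). split.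
- split; [exact: G_sym | exact: G_irr].
- exists (@posn n), (@arcn n). split.
  + split; first exact: posn_inj.
    move=> u v huv hG. have hf := G_fwd huv hG.
    have hne : posn u <> posn v.
      move=> /posn_inj h. by rewrite h ltnn in huv.
    split.
    * exact: segf_jordan.
    * exact: segf0.
    * exact: segf1.
    * move=> t w ht. exact: avoid hf ht.
  + move=> u v huv hG. exact: cross_ok.
- exact: girth5.
- have h := num_edges_ge n.
  have h2 : (5 * n <= 2 * num_edges (@G n) + 1200)%N.
    move: h (divmod n) (modlt n). rewrite /PP. lia.
  set m := num_edges (@G n) in h2 *.
  have hz : (5 * Z.of_nat n <= 2 * Z.of_nat m + 1200)%Z by lia.
  apply IZR_le in hz. rewrite plus_IZR !mult_IZR in hz.
  rewrite !INR_IZR_INZ. lra.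
Qed.
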